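(* For every tree $T$ of order $n\ge 2$ that is not isomorphic to the star $K_{1,n-1}$, $\gamma_{rdR}(T)\ge n+2$.
   Context: All graphs are finite and simple. An RDRD function of $G$ is a function $f:V(G)\to\{0,1,2,3\}$ such that every vertex with value $0$ has at least two neighbors with value $2$ or at least one neighbor with value $3$, every vertex with value $1$ has a neighbor with value $2$ or $3$, and the subgraph induced by the vertices with value $0$ has no isolated vertices; $\gamma_{rdR}(G)$ is the minimum of $\sum_v f(v)$ over RDRD functions. *)

(* Defs.v *)
From mathcomp Require Import all_boot.
Set Implicit Arguments. Unset Strict Implicit. Unset Printing Implicit Defensive.

Definition simple_graph (T : finType) (e : rel T) : Prop :=
  symmetric e /\ irreflexive e.

(* A tree: a connected simple graph with |V| - 1 edges.
   Edges are counted as ordered adjacent pairs, so there are 2(|V|-1). *)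
Definition is_tree (T : finType) (e : rel T) : Prop :=
  simple_graph e /\
  (forall x y : T, connect e x y) /\
  #|[set p : T * T | e p.1 p.2]| = 2 * (#|T| - 1).

Definition star_rel (n : nat) : rel 'I_n :=
  fun i j => ((val i == 0) && (val j != 0)) || ((val j == 0) && (val i != 0)).

Definition graph_iso (T T' : finType) (e : rel T) (e' : rel T') : Prop :=
  exists h : T -> T', bijective h /\ forall x y, e x y = e' (h x) (h y).

Definition is_RDRD (T : finType) (e : rel T) (f : {ffun T -> 'I_4}) : bool :=
  [forall v,
    ((val (f v) == 0) ==>
       ((2 <= #|[set u | e v u & val (f u) == 2]|) ||
        [exists u, e v u && (val (f u) == 3)])) &&
    ((val (f v) == 1) ==> [exists u, e v u && (2 <= val (f u))]) &&
    ((val (f v) == 0) ==> [exists u, e v u && (val (f u) == 0)])].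

Definition weight (T : finType) (f : {ffun T -> 'I_4}) : nat :=
  \sum_(v : T) val (f v).

(* gamma_rdR: minimum weight of an RDRD function.  The constant-3 function
   is always RDRD and has weight 3|T|, so 3|T| is a correct neutral start. *)
Definition gamma_rdR (T : finType) (e : rel T) : nat :=
  \big[minn/(3 * #|T|)]_(f : {ffun T -> 'I_4} | is_RDRD e f) weight f.

(* Main.v *)
Require Import Defs.
From mathcomp Require Import all_boot all_fingroup zify.
Set Implicit Arguments. Unset Strict Implicit. Unset Printing Implicit Defensive.

Lemma card_sum (T : finType) (P : pred T) : #|[set u | P u]| = \sum_u (P u : nat).
Proof.
rewrite -sum1_card big_mkcond /=; apply: eq_bigr => u _; rewrite inE; by case: (P u).
Qed.

Lemma edges_sum (T : finType) (e : rel T) :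
  #|[set p : T * T | e p.1 p.2]| = \sum_u \sum_w (e u w : nat).
Proof.
rewrite card_sum pair_big /=; by [].
Qed.

Definition F (T : finType) (e : rel T) (S : {set T}) : nat :=
  \sum_(v in S) \sum_(w in S) (e v w : nat).

Lemma exit_edge (T : finType) (e : rel T) (S : {set T}) :
  symmetric e -> (forall x y, connect e x y) -> S != set0 -> S != setT ->
  exists s v, [/\ s \in S, v \notin S & e s v].
Proof.
move=> esym con /set0Pn [s Hs] HT.
have [v Hv] : exists v, v \notin S.
  apply/existsP; rewrite -negb_forall; apply: contra HT => /forallP H.
  by apply/eqP/setP => x; rewrite inE H.
case: (boolP [exists s, exists v, [&& s \in S, v \notin S & e s v]]).
  by move=> /existsP [s' /existsP [v' /and3P [H1 H2 H3]]]; exists s', v'.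
move=> /negP Hn; exfalso.
have H : forall x y, e x y -> (x \in S) = (y \in S).
  move=> x y exy; case Hx: (x \in S); case Hy: (y \in S) => //.
    by exfalso; apply: Hn; apply/existsP; exists x; apply/existsP; exists y; rewrite Hx Hy exy.
  by exfalso; apply: Hn; apply/existsP; exists y; apply/existsP; exists x; rewrite Hx Hy esym exy.
have cl : closed e (mem S) := H.
by move: (closed_connect cl (con s v)); rewrite Hs (negbTE Hv).
Qed.

Lemma forest_bound (T : finType) (e : rel T) :
  is_tree e -> forall S : {set T}, S != set0 -> F e S <= 2 * (#|S| - 1).
Proof.
move=> [[esym eirr] [con cnt]].
suff H : forall k (S : {set T}), #|~: S| <= k -> S != set0 -> F e S <= 2 * (#|S| - 1).
  by move=> S; apply: (H _ S (leqnn _)).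
elim=> [|k IH] S HS Hne.
  have -> : S = setT.
    apply/setP => x; rewrite inE; apply/negPn/negP => Hx.
    by move: HS; rewrite leqn0 => /eqP/cards0_eq/setP/(_ x); rewrite !inE Hx.
  by rewrite /F cardsT -cnt edges_sum; apply: eq_leq; apply: eq_big => [u|u _]; rewrite ?inE //; apply: eq_bigl => w; rewrite inE.
case: (boolP (S == setT)) => [/eqP -> | HT].
  by rewrite /F cardsT -cnt edges_sum; apply: eq_leq; apply: eq_big => [u|u _]; rewrite ?inE //; apply: eq_bigl => w; rewrite inE.
have [s [v [Hs Hv esv]]] := exit_edge esym con Hne HT.
have HS' : #|~: (v |: S)| <= k.
  rewrite setCU -ltnS; apply: leq_trans HS; apply: proper_card.
  rewrite properE subsetIr /=; apply/subsetPn; exists v; rewrite !inE ?Hv //.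
  by rewrite eqxx.
have Hne' : v |: S != set0 by apply/set0Pn; exists v; rewrite !inE eqxx.
have := IH _ HS' Hne'.
rewrite /F big_setU1 //= cardsU1 Hv /=.
have H1 : forall u, \sum_(w in v |: S) (e u w : nat) = e u v + \sum_(w in S) (e u w : nat).
  by move=> u; rewrite big_setU1.
rewrite H1.
have H2 : \sum_(u in S) \sum_(w in S) (e u w : nat) + 1 <= \sum_(u in S) \sum_(w in v |: S) (e u w : nat).
  rewrite (bigD1 s Hs) /= [X in _ <= X](bigD1 s Hs) /= H1 esv.
  set A := \sum_(i in S | i != s) _; set B := \sum_(i in S | i != s) _.
  have : A <= B by apply: leq_sum => u _; rewrite H1; exact: leq_addl.
  simpl; lia.
have H3 : 0 < #|S| by apply/card_gt0P; exists s.
move=> H4.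
have H5 : 1 <= \sum_(w in S) (e v w : nat) by rewrite (bigD1 s Hs) /= esym esv.
lia.
Qed.

Section Main.
Variable (T : finType) (e : rel T) (f : {ffun T -> 'I_4}).
Definition av v := val (f v).
Definition zv v : nat := (av v == 0).
Definition bv v := (av v).-1.
Definition d0 u := \sum_w (e u w : nat) * zv w.
Definition Xp u : bool := (0 < bv u) && (0 < d0 u).
End Main.

Lemma xch (T : finType) (e : rel T) (P Q : T -> nat) : symmetric e ->
  \sum_v P v * \sum_w (e v w : nat) * Q w = \sum_w Q w * \sum_v (e w v : nat) * P v.
Proof.
move=> esym.
rewrite (eq_bigr (fun v => \sum_w P v * ((e v w : nat) * Q w))); last by move=> v _; rewrite big_distrr.
rewrite exchange_big /=; apply: eq_bigr => w _; rewrite big_distrr; apply: eq_bigr => v _.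
rewrite [e w v]esym /=; lia.
Qed.

Lemma sum_two (T : finType) (S : {set T}) (g : T -> nat) w1 w2 :
  w1 \in S -> w2 \in S -> w1 != w2 -> g w1 + g w2 <= \sum_(w in S) g w.
Proof.
move=> h1 h2 h12; rewrite (bigD1 w1 h1) /= leq_add2l (bigD1 w2) /=; first exact: leq_addr.
by apply/andP; split; [exact: h2 | rewrite eq_sym].
Qed.

Lemma main_ineq (T : finType) (e : rel T) (f : {ffun T -> 'I_4}) :
  is_tree e -> is_RDRD e f -> 0 < \sum_v zv f v ->
  \sum_v zv f v + 2 <= \sum_v bv f v.
Proof.
move=> tr RD N0pos.
have [[esym eirr] _] := tr.
move/forallP: RD => RD.
set N0 := \sum_v zv f v; set Bs := \sum_v bv f v.
have ab : forall v, av f v < 4 by move=> v; exact: ltn_ord.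
have I1 : 2 * N0 <= \sum_v zv f v * \sum_u (e v u : nat) * bv f u.
  rewrite /N0 big_distrr; apply: leq_sum => v _.
  rewrite /zv; case: eqP => Hz /=; rewrite ?muln0 // mul1n.
  case/andP: (RD v) => /andP [/implyP C1 _] _; move: (C1 (introT eqP Hz)) => /orP [H|/existsP [u /andP [evu au]]].
    apply: (leq_trans H); rewrite card_sum; apply: leq_sum => u _.
    rewrite /bv /av; case: (e v u); case: eqP => //= ->; by [].
  rewrite (bigD1 u) //= evu /bv /av (eqP au) /=; exact: leq_addr.
have I2 : \sum_v zv f v * \sum_u (e v u : nat) * bv f u = \sum_u bv f u * d0 e f u.
  by rewrite xch.
set NX := \sum_u (Xp e f u : nat).
set Q2 := \sum_u (Xp e f u : nat) * d0 e f u.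
have I3 : \sum_u bv f u * d0 e f u + 2 * NX <= Bs + 2 * Q2.
  rewrite /NX /Q2 !big_distrr -!big_split /=; apply: leq_sum => u _.
  rewrite /Xp.
  have hb : bv f u <= 2 by rewrite /bv; move: (ab u); lia.
  move: (bv f u) (d0 e f u) hb => x y; case: x => [|[|[|x]]] //= _; case: y => [|y] /=; lia.
have zX : forall v, zv f v = 1 -> Xp e f v = false.
  by move=> v; rewrite /zv /Xp /bv; case: eqP => // -> _.
set S := [set v | (zv f v == 1) || Xp e f v].
have zb : forall v, zv f v <= 1 by move=> v; rewrite /zv; case: (_ == _).
have cardS : #|S| = N0 + NX.
  rewrite card_sum /N0 /NX -big_split; apply: eq_bigr => v _.
  case: (boolP (zv f v == 1)) => [/eqP h|h] /=; first by rewrite (zX _ h) h.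
  have -> : zv f v = 0 by move: (zb v) h; case: (zv f v) => [|[|]].
  by case: (Xp e f v).
have Sne : S != set0.
  apply/set0Pn; case: (pickP (fun v => zv f v == 1)) => [v hv|H]; first by exists v; rewrite inE hv.
  exfalso; move: N0pos; rewrite /N0 big1 // => v _; move: (H v) (zb v) => /= /negbT; case: (zv f v) => [|[|]] //.
have I4 := forest_bound tr Sne.
have I5 : N0 + 2 * Q2 <= F e S.
  have mid : \sum_v zv f v * \sum_w (e v w : nat) * Xp e f w = Q2 by rewrite xch.
  rewrite /F big_mkcond /=.
  apply: (@leq_trans (\sum_v (zv f v + zv f v * \sum_w (e v w : nat) * Xp e f w + (Xp e f v : nat) * d0 e f v))).
    by rewrite !big_split /= mid /Q2; lia.
  apply: leq_sum => v _; rewrite inE.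
  case: (boolP (zv f v == 1)) => [/eqP hz|hz] /=.
    rewrite (zX _ hz) hz /= mul0n addn0 mul1n.
    have -> : \sum_(i in S) (e v i : nat) = d0 e f v + \sum_w (e v w : nat) * Xp e f w.
      rewrite big_mkcond /d0 -big_split; apply: eq_bigr => w _; rewrite inE.
      case: (boolP (zv f w == 1)) => [/eqP h|h] /=; first by rewrite (zX _ h) h; case: (e v w).
      have -> : zv f w = 0 by move: (zb w) h; case: (zv f w) => [|[|]].
      by case: (Xp e f w); case: (e v w).
    have : 1 <= d0 e f v.
      case/andP: (RD v) => _ /implyP C3; move: hz; rewrite /zv; case: eqP => // Hz _.
      case/existsP: (C3 (introT eqP Hz)) => u /andP [evu au].
      by rewrite /d0 (bigD1 u) //= evu /zv au.
    lia.
  have -> : zv f v = 0 by move: (zb v) hz; case: (zv f v) => [|[|]].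
  rewrite mul0n !add0n; case: (Xp e f v) => //=; rewrite mul1n /d0 [X in _ <= X]big_mkcond /=.
  apply: leq_sum => w _; rewrite inE; case: (e v w) => //=; rewrite mul1n.
  by case: (boolP (zv f w == 1)) => [/eqP -> //| h]; move: (zb w) h; case: (zv f w) => [|[|]].
rewrite I2 in I1.
lia.
Qed.

Lemma no_triangle (T : finType) (e : rel T) c x y :
  is_tree e -> e c x -> e c y -> e x y -> False.
Proof.
move=> tr ecx ecy exy; have [[esym eirr] _] := tr.
have neq : forall u v, e u v -> u != v by move=> u v; apply: contraTneq => ->; rewrite eirr.
set S := [set c; x; y].
have Sne : S != set0 by apply/set0Pn; exists c; rewrite !inE eqxx.
have := forest_bound tr Sne.
have H : \sum_(v in S) 2 <= F e S.
  apply: leq_sum => v; rewrite !inE => /orP [/orP [] /eqP ->|/eqP ->].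
  - have := @sum_two T S (fun w => (e c w : nat)) x y _ _ (neq _ _ exy).
    by rewrite ecx ecy !inE !eqxx ?orbT => /(_ isT isT).
  - have := @sum_two T S (fun w => (e x w : nat)) c y _ _ (neq _ _ ecy).
    by rewrite esym ecx exy !inE !eqxx ?orbT => /(_ isT isT).
  - have := @sum_two T S (fun w => (e y w : nat)) c x _ _ (neq _ _ ecx).
    by rewrite esym ecy (esym y x) exy !inE !eqxx ?orbT => /(_ isT isT).
rewrite sum_nat_const in H.
have : 0 < #|S| by apply/card_gt0P; exists c; rewrite !inE eqxx.
lia.
Qed.

Lemma weight_id (T : finType) (f : {ffun T -> 'I_4}) :
  weight f + \sum_v zv f v = #|T| + \sum_v bv f v.
Proof.
have -> : weight f = \sum_v av f v by [].
have -> : #|T| = \sum_(v : T) 1.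
  by rewrite -cardsT card_sum.
rewrite -!big_split /=; apply: eq_bigr => v _.
rewrite /zv /bv /av; case: (\val (f v)) => [|n] /=; lia.
Qed.

Lemma rdrd_bound (T : finType) (e : rel T) (f : {ffun T -> 'I_4}) :
  is_tree e -> 2 <= #|T| -> ~ graph_iso e (@star_rel #|T|) -> is_RDRD e f ->
  #|T| + 2 <= weight f.
Proof.
move=> tr n2 nstar RD.
have [[esym eirr] _] := tr.
have W := weight_id f.
case: (posnP (\sum_v zv f v)) => [N0|N0pos]; last first.
  have := main_ineq tr RD N0pos; lia.
case: (leqP 2 (\sum_v bv f v)) => Hb; first lia.
exfalso; apply: nstar.
move/forallP: RD => RD.
have znot : forall v, av f v != 0.
  move=> v; apply/negP => /eqP h; move: N0; rewrite (bigD1 v) //= /zv h /=; lia.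
have bsum2 : forall u v, u != v -> bv f u + bv f v <= \sum_w bv f w.
  move=> u v uv; rewrite (bigD1 u) //= leq_add2l (bigD1 v) /=; first exact: leq_addr.
  by rewrite eq_sym.
have /card_gt0P [v0 _] : 0 < #|T| by lia.
have [c hc] : exists c, 2 <= av f c.
  case: (leqP 2 (av f v0)) => h; first by exists v0.
  case/andP: (RD v0) => /andP [_ /implyP C2] _.
  have : val (f v0) == 1 by move: (znot v0) h; rewrite /av; lia.
  by move/C2 => /existsP [u /andP [_ hu]]; exists u.
have others : forall u, u != c -> av f u = 1 /\ e u c.
  move=> u uc.
  have hb : bv f u = 0 by move: (bsum2 _ _ uc) hc Hb; rewrite /bv; lia.
  have a1 : av f u = 1 by move: hb (znot u); rewrite /bv; lia.
  split => //.
  case/andP: (RD u) => /andP [_ /implyP C2] _.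
  case/existsP: (C2 (introT eqP a1)) => w /andP [euw hw].
  case: (eqVneq w c) => [<- //|wc].
  by move: (bsum2 _ _ wc) hc hw Hb; rewrite /bv /av; lia.
have i0lt : 0 < #|T| by lia.
pose i0 := Ordinal i0lt.
pose h := tperm (enum_rank c) i0 \o enum_rank.
exists h; split.
  by apply: bij_comp; [apply: injF_bij; exact: perm_inj | exact: enum_rank_bij].
have hinj : injective h by apply: inj_comp; [exact: perm_inj | exact: enum_rank_inj].
have hz : forall x, (val (h x) == 0) = (x == c).
  move=> x; have -> : (val (h x) == 0) = (h x == h c) by rewrite /h /= tpermL.
  exact: inj_eq.
move=> x y; rewrite /star_rel !hz.
case: (eqVneq x c) => [->|xc]; case: (eqVneq y c) => [->|yc] //=.
- by rewrite esym; case: (others _ yc).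
- by case: (others _ xc).
apply/negP => exy.
case: (others _ xc) => _ exc; case: (others _ yc) => _ eyc.
by apply: (no_triangle tr (c := c) (x := x) (y := y)); rewrite // esym.
Qed.

Theorem theorem3p1 (T : finType) (e : rel T) :
  is_tree e -> 2 <= #|T| ->
  ~ graph_iso e (@star_rel #|T|) ->
  #|T| + 2 <= gamma_rdR e.
Proof.
move=> tr n2 nstar; rewrite /gamma_rdR.
apply: (big_ind (fun m => #|T| + 2 <= m)).
- lia.
- by move=> x y hx hy; rewrite leq_min hx hy.
- by move=> g; apply: rdrd_bound.
Qed.
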